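(* For $N\in\mathbb N$ let $S_N=1+\frac{N+1}{2N}$, $x_{N,k}=\frac{k}{N^2}$ and $\lambda_{N,k}=\frac{1}{S_N}\left(1+\frac kN\right)\frac1N$ for $k=1,\dots,N$. Let $V_{N,1},\dots,V_{N,N}$ solve the deterministic system $$\frac{d}{dt}V_{N,k}(t)=\sum_{j\neq k}\frac{2(\lambda_{N,k}+\lambda_{N,j})}{V_{N,k}(t)-V_{N,j}(t)},\qquad V_{N,k}(0)=x_{N,k},$$ and let $\alpha_{N,t}=\sum_{k=1}^N\lambda_{N,k}\delta_{V_{N,k}(t)}$. Then there exists $f\in C^2_b(\mathbb R,\mathbb C)$ such that the sequence $\left(\frac{d}{dt}\int_{\mathbb R}f(x)\,d\alpha_{N,t}(x)\Big|_{t=0}\right)_{N\in\mathbb N}$ is unbounded.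
   Context: $C^2_b(\mathbb R,\mathbb C)$ denotes the twice continuously differentiable functions $f:\mathbb R\to\mathbb C$ with $f,f',f''$ bounded. $\delta_x$ is the unit point mass at $x$. *)

(* Defs.v *)
From Stdlib Require Import Reals.
From Coquelicot Require Import Coquelicot.
Open Scope R_scope.

Definition is_rderive {V : NormedModule R_AbsRing} (g : R -> V) (x : R) (l : V) : Prop :=
  filterlim (fun h : R => scal (/ h) (minus (g (x + h)) (g x))) (at_right 0) (locally l).

Definition C2b (f : R -> C) : Prop :=
  exists (f1 f2 : R -> C),
    (forall x, is_derive f x (f1 x)) /\
    (forall x, is_derive f1 x (f2 x)) /\
    (forall x, continuous f2 x) /\
    exists B : R, forall x, Cmod (f x) <= B /\ Cmod (f1 x) <= B /\ Cmod (f2 x) <= B.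

Definition S_ (N : nat) : R := 1 + (INR N + 1) / (2 * INR N).
Definition x_ (N k : nat) : R := INR k / (INR N ^ 2).
Definition lam (N k : nat) : R := / S_ N * (1 + INR k / INR N) * / INR N.

Definition drift (N : nat) (V : nat -> R -> R) (k : nat) (t : R) : R :=
  sum_n_m (fun j => if Nat.eqb j k then 0
                    else 2 * (lam N k + lam N j) / (V k t - V j t)) 1 N.

Definition solves (N : nat) (V : nat -> R -> R) : Prop :=
  exists T : R, 0 < T /\
    forall k : nat, (1 <= k <= N)%nat ->
      V k 0 = x_ N k /\
      is_rderive (V k) 0 (drift N V k 0) /\
      (forall t, 0 < t < T -> is_derive (V k) t (drift N V k t)).

(** integral of f against alpha_{N,t} = sum_k lam_{N,k} delta_{V_{N,k}(t)}. *)
Definition int_alpha (N : nat) (V : nat -> R -> R) (f : R -> C) (t : R) : C :=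
  sum_n_m (fun k => (RtoC (lam N k) * f (V k t))%C) 1 N.

(* Main.v *)
Require Import Defs.
From Stdlib Require Import Reals Lra Lia Ratan FunctionalExtensionality.
From Coquelicot Require Import Coquelicot.
Open Scope R_scope.

Fixpoint sm (h:nat->R) (N:nat) : R := match N with O => 0 | S n => sm h n + h (S n) end.

Definition rd (g : R -> R) (l : R) : Prop :=
  filterlim (fun h => (g h - g 0) / h) (at_right 0) (locally l).

Lemma rd_iff g l : rd g l <-> is_rderive g 0 l.
Proof.
  unfold rd, is_rderive; split; apply filterlim_ext; intro h;
  rewrite Rplus_0_l; unfold scal, minus, plus, opp; simpl;
  unfold mult; simpl; unfold Rdiv; ring.
Qed.

Lemma lim_mult {T} (F : (T -> Prop) -> Prop) {FF : Filter F} (f g : T -> R) a b :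
  filterlim f F (locally a) -> filterlim g F (locally b) ->
  filterlim (fun x => f x * g x) F (locally (a * b)).
Proof.
  intros Hf Hg. eapply filterlim_comp_2; [exact Hf | exact Hg |].
  exact (@filterlim_mult R_AbsRing a b).
Qed.

Lemma lim_plus {T} (F : (T -> Prop) -> Prop) {FF : Filter F} (f g : T -> R) a b :
  filterlim f F (locally a) -> filterlim g F (locally b) ->
  filterlim (fun x => f x + g x) F (locally (a + b)).
Proof.
  intros Hf Hg. eapply filterlim_comp_2; [exact Hf | exact Hg |].
  exact (@filterlim_plus R_AbsRing R_NormedModule a b).
Qed.

Lemma lim_id0 : filterlim (fun h : R => h) (at_right 0) (locally 0).
Proof.
  intros P [e He]. exists e. intros y Hy _. apply He. exact Hy.
Qed.

Lemma rd_cont g l : rd g l -> filterlim g (at_right 0) (locally (g 0)).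
Proof.
  intro H.
  apply filterlim_ext_loc with (fun h => g 0 + h * ((g h - g 0)/h)).
  - exists (mkposreal _ Rlt_0_1). intros y _ Hy. field. lra.
  - assert (K := lim_plus (at_right 0) (fun _ => g 0) (fun h => h * ((g h - g 0)/h)) (g 0) (0 * l)
      (filterlim_const _) (lim_mult _ _ _ _ _ lim_id0 H)).
    replace (g 0 + 0 * l) with (g 0) in K by ring. exact K.
Qed.

Lemma rd_chain g l phi d : rd g l -> derivable_pt_lim phi (g 0) d ->
  rd (fun t => phi (g t)) (d * l).
Proof.
  intros H Hd. set (y0 := g 0) in *.
  set (Sf := fun y => match Req_EM_T y y0 with left _ => d | right _ => (phi y - phi y0)/(y - y0) end).
  assert (HS : filterlim Sf (locally y0) (locally d)).
  { intros P [eps HP]. destruct (Hd eps (cond_pos eps)) as [del Hdel].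
    exists del. intros y Hy. apply HP. change R in y. unfold Sf.
    destruct (Req_EM_T y y0) as [->|Hne]. apply ball_center.
    assert (Hh : y - y0 <> 0) by lra.
    specialize (Hdel (y - y0) Hh Hy).
    replace (y0 + (y - y0)) with y in Hdel by ring. exact Hdel. }
  unfold rd.
  apply filterlim_ext_loc with (fun h => ((g h - g 0)/h) * Sf (g h)).
  - exists (mkposreal _ Rlt_0_1). intros h _ Hh. unfold Sf. fold y0. destruct (Req_EM_T (g h) y0) as [E|E].
    + rewrite E. unfold Rdiv. ring.
    + field. split; lra.
  - rewrite Rmult_comm. apply (lim_mult _ _ _ _ _ H).
    eapply filterlim_comp; [apply (rd_cont g l H) | exact HS].
Qed.

Lemma rd_sum F L N : (forall k, (1 <= k <= N)%nat -> rd (F k) (L k)) ->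
  rd (fun t => sm (fun k => F k t) N) (sm L N).
Proof.
  induction N as [|N IH]; intro H; simpl.
  - unfold rd. apply filterlim_ext with (fun _ => 0).
    + intro h. unfold Rdiv. ring.
    + apply filterlim_const.
  - unfold rd. apply filterlim_ext with
      (fun h => (sm (fun k => F k h) N - sm (fun k => F k 0) N)/h + (F (S N) h - F (S N) 0)/h).
    + intro h. unfold Rdiv. ring.
    + refine (lim_plus _ _ _ _ _ _ _). apply IH. intros k Hk. apply H. lia. apply H. lia.
Qed.

Lemma rd_scale F L c : rd F L -> rd (fun t => c * F t) (c * L).
Proof.
  intro H. unfold rd. apply filterlim_ext with (fun h => c * ((F h - F 0)/h)).
  - intro h. unfold Rdiv. ring.
  - refine (lim_mult _ _ _ _ _ _ _). apply filterlim_const. exact H.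
Qed.

Lemma sum_R h N : sum_n_m h 1 N = sm h N.
Proof.
  induction N as [|N IH]. - rewrite sum_n_m_zero by lia. reflexivity.
  - rewrite sum_n_Sm by lia. rewrite IH. reflexivity.
Qed.

Lemma sum_C h N : sum_n_m (fun k => RtoC (h k)) 1 N = RtoC (sm h N).
Proof.
  induction N as [|N IH]. - rewrite sum_n_m_zero by lia. reflexivity.
  - rewrite sum_n_Sm by lia. rewrite IH. simpl. 
    unfold plus; simpl. unfold RtoC, Cplus; simpl. f_equal; ring.
Qed.

Lemma RtoC_cont l : filterlim RtoC (locally l) (locally (RtoC l)).
Proof.
  intros P [e He]. exists e. intros y Hy. apply He. split. exact Hy. apply ball_center.
Qed.

Lemma rd_C g l : rd g l -> is_rderive (fun t => RtoC (g t)) 0 (RtoC l).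
Proof.
  intro H. unfold is_rderive.
  apply filterlim_ext with (fun h => RtoC ((g h - g 0) / h)).
  - intro h. rewrite Rplus_0_l. unfold scal, minus, plus, opp; simpl.
    unfold RtoC. simpl. unfold Cplus, Copp; simpl. unfold scal; simpl. unfold mult; simpl.
    unfold prod_scal, prod_plus, prod_opp; simpl. unfold scal, plus, opp; simpl.
    unfold mult; simpl. f_equal; unfold Rdiv; ring.
  - eapply filterlim_comp. exact H. apply RtoC_cont.
Qed.

Lemma RtoC_lin : @is_linear R_AbsRing R_NormedModule C_R_NormedModule RtoC.
Proof.
  apply Build_is_linear.
  - intros a b. unfold plus; simpl. unfold prod_plus, RtoC; simpl. unfold plus; simpl. f_equal; ring.
  - intros k a. unfold scal; simpl. unfold prod_scal, RtoC; simpl. unfold scal; simpl. unfold mult; simpl. f_equal; ring.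
  - exists 1. split. lra. intro a. unfold norm; simpl. unfold prod_norm, RtoC; simpl. unfold norm; simpl. unfold abs; simpl.
    rewrite Rabs_R0. replace (Rabs a * (Rabs a * 1) + 0 * (0 * 1)) with (Rabs a * Rabs a) by ring.
    rewrite sqrt_square by apply Rabs_pos. lra.
Qed.

Lemma derive_C g x l : is_derive g x l -> is_derive (fun t => RtoC (g t)) x (RtoC l).
Proof.
  intro H. unfold is_derive in *.
  eapply filterdiff_ext_lin.
  - eapply filterdiff_comp. exact H. apply filterdiff_linear. exact RtoC_lin.
  - intro y. simpl. apply (linear_scal _ RtoC_lin y l).
Qed.

Definition fsin (x : R) : C := RtoC (sin x).

Lemma C2b_fsin : C2b fsin.
Proof.
  exists (fun x => RtoC (cos x)), (fun x => RtoC (- sin x)).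
  split; [|split; [|split]].
  - intro x. apply derive_C. apply is_derive_Reals. apply derivable_pt_lim_sin.
  - intro x. apply derive_C. apply is_derive_Reals. apply derivable_pt_lim_cos.
  - intro x. unfold continuous. eapply filterlim_comp; [|apply RtoC_cont].
    apply (continuity_pt_filterlim (fun x => - sin x)). apply continuity_pt_opp. apply continuity_sin.
  - exists 1. intro x. unfold fsin. rewrite !Cmod_R. 
    destruct (SIN_bound x). destruct (COS_bound x).
    rewrite Rabs_Ropp. repeat split; apply Rabs_le; lra.
Qed.

Lemma sm_S h n : sm h (S n) = sm h n + h (S n).
Proof. reflexivity. Qed.

Lemma sm_ext h1 h2 N : (forall k, (1 <= k <= N)%nat -> h1 k = h2 k) -> sm h1 N = sm h2 N.
Proof.
  induction N; intro H; simpl. reflexivity.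
  rewrite IHN, H. reflexivity. lia. intros; apply H; lia.
Qed.

Lemma sm_plus h1 h2 N : sm (fun k => h1 k + h2 k) N = sm h1 N + sm h2 N.
Proof. induction N; simpl. ring. rewrite IHN. ring. Qed.

Lemma sm_mult c h N : sm (fun k => c * h k) N = c * sm h N.
Proof. induction N; simpl. ring. rewrite IHN. ring. Qed.

Lemma sm_le h1 h2 N : (forall k, (1 <= k <= N)%nat -> h1 k <= h2 k) -> sm h1 N <= sm h2 N.
Proof.
  induction N; intro H; simpl. lra.
  apply Rplus_le_compat. apply IHN. intros; apply H; lia. apply H; lia.
Qed.

Lemma sm_const c N : sm (fun _ => c) N = INR N * c.
Proof. induction N; simpl sm. simpl. ring. rewrite IHN, S_INR. ring. Qed.

Lemma sm_tri c N : sm (fun k => sm (fun _ => c) (k - 1)) N = c * INR N * (INR N - 1) / 2.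
Proof.
  induction N. simpl. field.
  rewrite sm_S, IHN, sm_const. replace (S N - 1)%nat with N by lia. rewrite S_INR. field.
Qed.

Definition offd (a : nat -> nat -> R) k j := if Nat.eqb j k then 0 else a k j.

Lemma sym (a : nat -> nat -> R) (g : nat -> R) N : (forall k j, a k j = - a j k) ->
  sm (fun k => g k * sm (offd a k) N) N = sm (fun k => sm (fun j => a k j * (g k - g j)) (k - 1)) N.
Proof.
  intro Ha. induction N. reflexivity.
  rewrite sm_S.
  assert (A1 : sm (fun k => g k * sm (offd a k) (S N)) N =
     sm (fun k => g k * sm (offd a k) N) N + sm (fun k => g k * a k (S N)) N).
  { rewrite <- sm_plus. apply sm_ext. intros k Hk. rewrite sm_S. unfold offd at 2.
    replace (Nat.eqb (S N) k) with false. ring. symmetry. apply Nat.eqb_neq. lia. }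
  assert (A2 : sm (offd a (S N)) (S N) = sm (fun j => a (S N) j) N).
  { rewrite sm_S. unfold offd at 2. rewrite Nat.eqb_refl. rewrite Rplus_0_r.
    apply sm_ext. intros j Hj. unfold offd. replace (Nat.eqb j (S N)) with false. reflexivity.
    symmetry. apply Nat.eqb_neq. lia. }
  rewrite A1, A2, IHN, sm_S. replace (S N - 1)%nat with N by lia.
  assert (A3 : sm (fun j => a (S N) j * (g (S N) - g j)) N =
      g (S N) * sm (fun j => a (S N) j) N + sm (fun k => g k * a k (S N)) N).
  { rewrite <- sm_mult, <- sm_plus. apply sm_ext. intros k _. rewrite (Ha k (S N)). ring. }
  rewrite A3. ring.
Qed.

Lemma cos_lip p q : 0 <= q -> q <= p -> p <= 1 -> cos p - cos q >= - (p - q).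
Proof.
  intros H1 H2 H3. rewrite form2.
  assert (HP := PI2_1).
  assert (s1a : 0 <= sin ((p - q) / 2)) by (apply sin_ge_0; lra).
  assert (s1b : sin ((p - q) / 2) <= (p - q) / 2).
  { destruct (Req_dec p q) as [E|E]. subst. replace ((q - q)/2) with 0 by field. rewrite sin_0. lra.
    left. apply sin_lt_x. lra. }
  assert (s2a : 0 <= sin ((p + q) / 2)) by (apply sin_ge_0; lra).
  assert (s2b := SIN_bound ((p + q) / 2)).
  nra.
Qed.

Definition aa N k j := 2 * (lam N k + lam N j) / (x_ N k - x_ N j).
Definition gg N k := lam N k * cos (x_ N k).

Lemma aa_anti N k j : aa N k j = - aa N j k.
Proof.
  unfold aa. replace (x_ N j - x_ N k) with (- (x_ N k - x_ N j)) by ring.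
  unfold Rdiv. rewrite Rinv_opp. ring.
Qed.

Lemma term_bound N k j : (16 <= N)%nat -> (1 <= j)%nat -> (j < k)%nat -> (k <= N)%nat ->
  / (4 * INR N) <= aa N k j * (gg N k - gg N j).
Proof.
  intros HN Hj Hjk HkN.
  assert (Hn : 16 <= INR N) by (replace 16 with (INR 16) by (simpl; ring); apply le_INR; lia).
  assert (HJ : 1 <= INR j) by (replace 1 with (INR 1) by reflexivity; apply le_INR; lia).
  assert (HJK : INR j + 1 <= INR k) by (rewrite <- S_INR; apply le_INR; lia).
  assert (HK : INR k <= INR N) by (apply le_INR; lia).
  set (n := INR N) in *. set (J := INR j) in *. set (K := INR k) in *.
  assert (HS : 1 <= S_ N <= 2).
  { unfold S_. fold n. split.
    - assert (0 <= (n + 1) / (2 * n)) by (apply Rmult_le_pos; [lra | left; apply Rinv_0_lt_compat; lra]). lra.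
    - assert ((n + 1) / (2 * n) <= 1). { apply Rmult_le_reg_r with (2 * n). lra.
        unfold Rdiv. rewrite Rmult_assoc, Rinv_l by lra. lra. } lra. }
  set (Sn := S_ N) in *.
  assert (Hlam : forall i, (1 <= i <= N)%nat -> / (2 * n) <= lam N i <= 2 / n).
  { intros i Hi. assert (Hi1 : 0 <= INR i <= n) by (split; [apply pos_INR | apply le_INR; lia]).
    unfold lam. fold Sn n.
    assert (0 <= INR i / n <= 1). { split. apply Rmult_le_pos; [lra | left; apply Rinv_0_lt_compat; lra].
      apply Rmult_le_reg_r with n. lra. unfold Rdiv. rewrite Rmult_assoc, Rinv_l by lra. lra. }
    assert (1/2 <= / Sn <= 1). { split. replace (1/2) with (/2) by field. apply Rinv_le_contravar; lra.
      rewrite <- Rinv_1. apply Rinv_le_contravar; lra. }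
    assert (0 < / n) by (apply Rinv_0_lt_compat; lra).
    replace (/ (2 * n)) with (1/2 * 1 * / n) by (field; lra).
    replace (2 / n) with (1 * 2 * / n) by (field; lra).
    split; repeat apply Rmult_le_compat; nra. }
  assert (Lk := Hlam k ltac:(lia)). assert (Lj := Hlam j ltac:(lia)).
  assert (Hd : x_ N k - x_ N j = (K - J) / n ^ 2) by (unfold x_; fold n K J; field; lra).
  assert (Hdpos : 0 < x_ N k - x_ N j).
  { rewrite Hd. apply Rmult_lt_0_compat. lra. apply Rinv_0_lt_compat. nra. }
  set (d := x_ N k - x_ N j) in *.
  assert (Hdl : lam N k - lam N j = d / Sn). { unfold lam. fold Sn n. rewrite Hd. change (INR k) with K. change (INR j) with J. field. lra. }
  assert (Hxj : 0 <= x_ N j) by (unfold x_; change (INR j) with J; change (INR N) with n; apply Rmult_le_pos; [lra | left; apply Rinv_0_lt_compat; nra]).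
  assert (Hxk : x_ N k <= 1/16).
  { unfold x_. fold n K. apply Rmult_le_reg_r with (n ^ 2). nra. unfold Rdiv.
    rewrite Rmult_assoc, Rinv_l by nra. nra. }
  assert (Hjk' : x_ N j <= x_ N k) by (unfold d in Hdpos; lra).
  assert (Cl := cos_lip (x_ N k) (x_ N j) Hxj Hjk' ltac:(lra)). fold d in Cl.
  assert (C0 := cos_lip (x_ N k) 0 ltac:(lra) ltac:(lra) ltac:(lra)). rewrite cos_0 in C0.
  set (ck := cos (x_ N k)) in *. set (cj := cos (x_ N j)) in *.
  assert (HP : gg N k - gg N j >= d / 4).
  { unfold gg. fold ck cj.
    replace (lam N k * ck - lam N j * cj) with ((lam N k - lam N j) * ck + lam N j * (ck - cj)) by ring.
    rewrite Hdl.
    assert (d / Sn * ck >= d * (15/32)).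
    { replace (d / Sn * ck) with (d * (ck / Sn)) by (field; lra).
      apply Rle_ge. apply Rmult_le_compat_l. lra.
      assert (/2 <= / Sn) by (apply Rinv_le_contravar; lra). unfold Rdiv. nra. }
    assert (lam N j * (ck - cj) >= - (2 / n) * d).
    { assert (2 / n <= 1/8). { apply Rmult_le_reg_r with n. lra. unfold Rdiv. rewrite Rmult_assoc, Rinv_l by lra. lra. }
      assert (0 < / (2 * n)) by (apply Rinv_0_lt_compat; lra).
      assert (lam N j * (ck - cj + d) >= 0) by (apply Rle_ge, Rmult_le_pos; lra).
      assert ((2 / n - lam N j) * d >= 0) by (apply Rle_ge, Rmult_le_pos; lra).
      lra. }
    assert (2 / n <= 1/8). { apply Rmult_le_reg_r with n. lra. unfold Rdiv. rewrite Rmult_assoc, Rinv_l by lra. lra. }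
    nra. }
  unfold aa. fold d.
  assert (HA : 0 < 2 * (lam N k + lam N j) / d).
  { apply Rmult_lt_0_compat. assert (0 < / (2 * n)) by (apply Rinv_0_lt_compat; lra). lra.
    apply Rinv_0_lt_compat; lra. }
  apply Rle_trans with (2 * (lam N k + lam N j) / d * (d / 4)).
  - replace (2 * (lam N k + lam N j) / d * (d / 4)) with ((lam N k + lam N j) / 2) by (field; lra).
    replace (/ (4 * n)) with (/ (2 * n) / 2) by (field; repeat split; lra). unfold Rdiv. apply Rmult_le_compat_r. lra. assert (0 < / (2 * n)) by (apply Rinv_0_lt_compat; lra). lra.
  - apply Rmult_le_compat_l; lra.
Qed.

Definition EE N := sm (fun k => gg N k * sm (offd (aa N) k) N) N.

Lemma EE_bound N : (16 <= N)%nat -> (INR N - 1) / 8 <= EE N.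
Proof.
  intro HN. unfold EE. rewrite sym by apply aa_anti.
  apply Rle_trans with (sm (fun k => sm (fun _ => / (4 * INR N)) (k - 1)) N).
  - rewrite sm_tri. assert (16 <= INR N) by (replace 16 with (INR 16) by (simpl; ring); apply le_INR; lia).
    right. field. lra.
  - apply sm_le. intros k Hk. apply sm_le. intros j Hj. apply term_bound; lia.
Qed.

Lemma EE_rd N V : (1 <= N)%nat -> solves N V ->
  rd (fun t => sm (fun k => lam N k * sin (V k t)) N) (EE N).
Proof.
  intros HN [T [HT HV]].
  replace (EE N) with (sm (fun k => lam N k * (cos (V k 0) * drift N V k 0)) N).
  - apply rd_sum. intros k Hk. apply rd_scale. apply rd_chain.
    + apply rd_iff. apply (HV k Hk).
    + apply derivable_pt_lim_sin.
  - unfold EE. apply sm_ext. intros k Hk. destruct (HV k Hk) as [H0 _]. rewrite H0.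
    unfold drift. rewrite sum_R. unfold gg.
    rewrite (sm_ext _ (offd (aa N) k)). ring.
    intros j Hj. destruct (HV j Hj) as [Hj0 _]. rewrite Hj0, H0. unfold offd, aa. reflexivity.
Qed.

Theorem mainTheorem3 :
  exists f : R -> C, C2b f /\
    forall V : nat -> nat -> R -> R,
      (forall N : nat, (1 <= N)%nat -> solves N (V N)) ->
      exists D : nat -> C,
        (forall N : nat, (1 <= N)%nat -> is_rderive (int_alpha N (V N) f) 0 (D N)) /\
        (forall M : R, exists N : nat, (1 <= N)%nat /\ M < Cmod (D N)).
Proof.
  exists fsin. split. apply C2b_fsin.
  intros V HV. exists (fun N => RtoC (EE N)). split.
  - intros N HN.
    replace (int_alpha N (V N) fsin) with (fun t => RtoC (sm (fun k => lam N k * sin (V N k t)) N)).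
    + apply rd_C. apply EE_rd; auto.
    + apply functional_extensionality. intro t. unfold int_alpha, fsin.
      rewrite <- sum_C. apply sum_n_m_ext. intro k. apply RtoC_mult.
  - intro M. destruct (INR_unbounded (8 * M + 1)) as [n0 Hn0].
    exists (n0 + 16)%nat. split. lia. rewrite Cmod_R.
    assert (H := EE_bound (n0 + 16) ltac:(lia)).
    rewrite plus_INR in H. replace (INR 16) with 16 in H by (simpl; ring).
    apply Rlt_le_trans with (EE (n0 + 16)). lra. apply Rle_abs.
Qed.
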